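(* Let $0<\varepsilon\le\frac1{12}$ and let $(x,y,z,C)\in\tilde Q(r)$ with $r\ge5$, and let $d(j_1,j_2):=1-y_{j_1,j_2}$. For $j\in J$ define $t^*_j:=\min\{t'\in[T]:\sum_{i\in[m]}\sum_{t=1}^{t'}z_{j,i,t}\ge1-\varepsilon\}$. Let $U\subseteq J$ with $\max_{u,v\in U}d(u,v)\le\varepsilon$, enumerate $U=\{j_1,\dots,j_{|U|}\}$ so that $t^*_{j_1}\le\dots\le t^*_{j_{|U|}}$ (ties broken arbitrarily), and process these jobs consecutively on one machine in this order in slots $1,2,\dots,|U|$, so that $j_k$ has completion time $C^A_{j_k}=k$. Then $C^A_j\le 2t^*_j$ for every $j\in U$.
   Context: Fix a finite set $J$ of unit-length jobs, a partial order $\prec$ on $J$, and $c,S,m\in\mathbb N$; let $T:=Sc$, $[T]=\{1,\dots,T\}$, and for $s\in\{0,\dots,S-1\}$ let $I_s:=\{cs+1,\dots,c(s+1)\}$. Sherali–Adams lift: for a polytope $K=\{x\in\mathbb R^{V}:Ax\ge b\}$ on a finite index set $V$ and $r\ge0$, $SA_r(K)$ is the set of vectors $y$ indexed by subsets of $V$ of size at most $r+1$ with $y_\emptyset=1$ and, for every row $\ell$ and all $I,J'\subseteq V$ with $|I|+|J'|\le r$, $\sum_{H\subseteq J'}(-1)^{|H|}\big(\sum_{v\in V}A_{\ell,v}y_{I\cup H\cup\{v\}}-b_\ell y_{I\cup H}\big)\ge0$. Let $\tilde K$ be the polytope in variables $z_{j,i,t}$ ($j\in J,i\in[m],t\in[T]$)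 and $x_{j,i,s}$ ($j\in J,i\in[m],s\in\{0,\dots,S-1\}$) defined by: $\sum_{i\in[m]}\sum_{t\in[T]}z_{j,i,t}=1$ for all $j$; $\sum_{j\in J}z_{j,i,t}\le1$ for all $i,t$; $\sum_{t'<t}\sum_{i}z_{j_1,i,t'}\ge\sum_{t'\le t}\sum_i z_{j_2,i,t'}$ for all $j_1\prec j_2$ and $t\in[T]$; $\sum_{t\in I_s}z_{j,i,t}=x_{j,i,s}$ for all $j,i,s$; $0\le z_{j,i,t}\le1$. For a vector in $SA_r(\tilde K)$ write $x_{j,i,s}$, $z_{j,i,t}$ for its singleton entries and $x_{(j_1,i_1,s_1),(j_2,i_2,s_2)}$ for the entry indexed by the set of the two $x$-variables. $\tilde Q(r)$ is the set of $(x,y,z,C)$ with $(x,z)\in SA_r(\tilde K)$, $y_{j_1,j_2}=\sum_{s=0}^{S-1}\sum_{i\in[m]}x_{(j_1,i,s),(j_2,i,s)}$ for all $j_1,j_2$, $C_{j_2}\ge C_{j_1}+(1-y_{j_1,j_2})\cdot c$ for all $j_1\prec j_2$, and $C_j=\sum_{i\in[m]}\sum_{t\in[T]}z_{j,i,t}\cdot t$ for all $j$. *)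

(* Defs.v *)
From mathcomp Require Import all_boot all_order all_algebra.
Set Implicit Arguments. Unset Strict Implicit. Unset Printing Implicit Defensive.
Import Order.TTheory GRing.Theory Num.Theory.
Local Open Scope ring_scope.

(* A vector of SA_r(K) is indexed by subsets of V of size <= r+1; we model it
   as a function on all subsets {set V}; only entries on sets of size <= r+1
   are ever used. *)
Definition SA (R : realFieldType) (V : finType) (L : Type)
  (A : L -> V -> R) (b : L -> R) (r : nat) (y : {set V} -> R) : Prop :=
  y set0 = 1 /\
  forall (l : L) (I J' : {set V}), (#|I| + #|J'| <= r)%N ->
    0 <= \sum_(H : {set V} | H \subset J')
           (-1) ^+ #|H| *
           (\sum_(v : V) A l v * y (I :|: H :|: [set v]) - b l * y (I :|: H)).

(* ---------- The polytope K~ ----------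
   Time slot t in [T] = {1..T} is encoded by the ordinal t' : 'I_T with t = t'+1.
   Machine i in [m] is 'I_m, block s in {0..S-1} is 'I_S. *)
Definition Tn (c S : nat) : nat := (S * c)%N.

Definition var (J : finType) (m c S : nat) : finType :=
  ((J * 'I_m * 'I_(Tn c S)) + (J * 'I_m * 'I_S))%type.

Definition zv (J : finType) (m c S : nat) (j : J) (i : 'I_m) (t : 'I_(Tn c S))
  : var J m c S := inl (j, i, t).
Definition xv (J : finType) (m c S : nat) (j : J) (i : 'I_m) (s : 'I_S)
  : var J m c S := inr (j, i, s).

(* rows of the system A x >= b describing K~ (equalities = two inequalities) *)
Inductive Krow (J : finType) (m T S : nat) : Type :=
| RAsgLo of J                      (*  sum_{i,t} z_{j,i,t} >= 1 *)
| RAsgUp of J                      (* -sum_{i,t} z_{j,i,t} >= -1 *)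
| RCap of 'I_m & 'I_T              (* -sum_j z_{j,i,t} >= -1 *)
| RPrec of J & J & 'I_T
| RSlotLo of J & 'I_m & 'I_S       (*  sum_{t in I_s} z_{j,i,t} - x_{j,i,s} >= 0 *)
| RSlotUp of J & 'I_m & 'I_S       (* -sum_{t in I_s} z_{j,i,t} + x_{j,i,s} >= 0 *)
| RNonneg of J & 'I_m & 'I_T       (*  z_{j,i,t} >= 0 *)
| RLeOne of J & 'I_m & 'I_T.       (* -z_{j,i,t} >= -1 *)

Definition KA (R : realFieldType) (J : finType) (prec : rel J) (c S m : nat)
  (l : Krow J m (Tn c S) S) (v : var J m c S) : R :=
  match l, v with
  | RAsgLo j, inl (j', _, _) => (j' == j)%:R
  | RAsgUp j, inl (j', _, _) => - (j' == j)%:R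
  | RCap i t, inl (_, i', t') => - ((i' == i) && (t' == t))%:R
  | RPrec j1 j2 t, inl (j, _, t') =>
      if prec j1 j2 then
        ((j == j1) && (t' < t)%N)%:R - ((j == j2) && (t' <= t)%N)%:R
      else 0
  | RSlotLo j i s, inl (j', i', t') =>
      [&& j' == j, i' == i & (c * s <= t' < c * s + c)%N]%:R
  | RSlotLo j i s, inr (j', i', s') => - [&& j' == j, i' == i & s' == s]%:R
  | RSlotUp j i s, inl (j', i', t') =>
      - [&& j' == j, i' == i & (c * s <= t' < c * s + c)%N]%:R
  | RSlotUp j i s, inr (j', i', s') => [&& j' == j, i' == i & s' == s]%:R
  | RNonneg j i t, inl (j', i', t') => [&& j' == j, i' == i & t' == t]%:R
  | RLeOne j i t, inl (j', i', t') => - [&& j' == j, i' == i & t' == t]%:R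
  | _, _ => 0
  end.

Definition Kb (R : realFieldType) (J : finType) (m T S : nat)
  (l : Krow J m T S) : R :=
  match l with
  | RAsgLo _ => 1
  | RAsgUp _ => -1
  | RCap _ _ => -1
  | RPrec _ _ _ => 0
  | RSlotLo _ _ _ => 0
  | RSlotUp _ _ _ => 0
  | RNonneg _ _ _ => 0
  | RLeOne _ _ _ => -1
  end.

Definition SAK (R : realFieldType) (J : finType) (prec : rel J) (c S m r : nat)
  (Y : {set var J m c S} -> R) : Prop :=
  SA (@KA R J prec c S m) (@Kb R J m (Tn c S) S) r Y.

Definition zval (R : realFieldType) (J : finType) (m c S : nat)
  (Y : {set var J m c S} -> R) (j : J) (i : 'I_m) (t : 'I_(Tn c S)) : R :=
  Y [set @zv J m c S j i t].
Definition xval (R : realFieldType) (J : finType) (m c S : nat)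
  (Y : {set var J m c S} -> R) (j : J) (i : 'I_m) (s : 'I_S) : R :=
  Y [set @xv J m c S j i s].
Definition xpair (R : realFieldType) (J : finType) (m c S : nat)
  (Y : {set var J m c S} -> R) (j1 : J) (i1 : 'I_m) (s1 : 'I_S)
  (j2 : J) (i2 : 'I_m) (s2 : 'I_S) : R :=
  Y [set @xv J m c S j1 i1 s1; @xv J m c S j2 i2 s2].

Definition Qtilde (R : realFieldType) (J : finType) (prec : rel J)
  (c S m r : nat) (Y : {set var J m c S} -> R) (y : J -> J -> R) (C : J -> R)
  : Prop :=
  [/\ SAK prec r Y,
      forall j1 j2 : J,
        y j1 j2 = \sum_(s < S) \sum_(i < m) xpair Y j1 i s j2 i s,
      forall j1 j2 : J, prec j1 j2 -> C j2 >= C j1 + (1 - y j1 j2) * c%:R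
    & forall j : J,
        C j = \sum_(i < m) \sum_(t < Tn c S) zval Y j i t * (t.+1)%:R].

Definition cumz (R : realFieldType) (J : finType) (m c S : nat)
  (Y : {set var J m c S} -> R) (j : J) (t' : nat) : R :=
  \sum_(i < m) \sum_(t < Tn c S | (t < t')%N) zval Y j i t.

(* t*_j = min { t' in [T] : cumz j t' >= 1 - eps } (returns T+1 if the set is
   empty, which never happens for SA points since the z_j's sum to 1) *)
Definition tstar (R : realFieldType) (J : finType) (m c S : nat)
  (Y : {set var J m c S} -> R) (eps : R) (j : J) : nat :=
  (find (fun t' => 1 - eps <= cumz Y j t') (iota 1 (Tn c S))).+1.

(* Main.v *)
Require Import Defs.
From mathcomp Require Import all_boot all_order all_algebra.
From mathcomp Require Import zify ring lra.
Import Order.TTheory GRing.Theory Num.Theory.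
Local Open Scope ring_scope.
Set Implicit Arguments. Unset Strict Implicit.


Lemma sum_var (R : realFieldType) (J : finType) (m c S : nat)
  (F : var J m c S -> R) :
  \sum_(v : var J m c S) F v =
  \sum_(j : J) \sum_(i < m) \sum_(t < Tn c S) F (zv j i t) +
  \sum_(j : J) \sum_(i < m) \sum_(s < S) F (@xv J m c S j i s).
Proof.
rewrite big_sumType; congr (_ + _).
- rewrite pair_bigA pair_bigA; apply: eq_bigr => -[[j i] t] _ //.
- rewrite pair_bigA pair_bigA; apply: eq_bigr => -[[j i] t] _ //.
Qed.

Lemma sum_delta (R : realFieldType) (T : finType) (a : T) (X : T -> R) :
  \sum_(x : T) (x == a)%:R * X x = X a.
Proof.
rewrite (bigD1 a) //= eqxx mul1r big1 ?addr0 // => x /negPf ->.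
by rewrite mul0r.
Qed.

Lemma bigsub0 (R : realFieldType) (V : finType) (F : {set V} -> R) :
  \sum_(H : {set V} | H \subset set0) F H = F set0.
Proof. by rewrite (big_pred1 set0) // => H; rewrite /= subset0. Qed.

Lemma SA0 (R : realFieldType) (J : finType) (prec : rel J) (c S m r : nat)
  (Y : {set var J m c S} -> R) (l : Krow J m (Tn c S) S) :
  SAK prec r Y ->
  0 <= \sum_(v : var J m c S) @KA R J prec c S m l v * Y [set v] - @Kb R J m (Tn c S) S l.
Proof.
move=> [Y0 H]; have := H l set0 set0; rewrite cards0 => /(_ isT).
rewrite bigsub0 cards0 expr0 mul1r !set0U Y0 mulr1.
by under eq_bigr => v _ do rewrite set0U.
Qed.

Lemma SA1 (R : realFieldType) (J : finType) (prec : rel J) (c S m r : nat)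
  (Y : {set var J m c S} -> R) (l : Krow J m (Tn c S) S) (w : var J m c S) :
  (1 <= r)%N -> SAK prec r Y ->
  0 <= \sum_(v : var J m c S) @KA R J prec c S m l v * Y [set w; v] - @Kb R J m (Tn c S) S l * Y [set w].
Proof.
move=> r1 [Y0 H]; have := H l [set w] set0; rewrite cards0 cards1 addn0 => /(_ r1).
by rewrite bigsub0 cards0 expr0 mul1r !setU0.
Qed.


Section X.
Variables (R : realFieldType) (J : finType) (prec : rel J) (c S m : nat).
Implicit Types (G : var J m c S -> R).
Local Notation KA := (@KA R J prec c S m).
Local Notation zv := (@zv J m c S).
Local Notation xv := (@xv J m c S).
Local Notation KR := (Krow J m (Tn c S) S).

Lemma KA_nonneg j i t G : \sum_v KA (@RNonneg J m (Tn c S) S j i t) v * G v = G (zv j i t).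
Proof.
rewrite sum_var /= [X in _ + X]big1 ?addr0; last first.
  by move=> *; apply: big1 => *; apply: big1 => *; rewrite mul0r.
rewrite (bigD1 j) //= [X in _ + X]big1 ?addr0; last first.
  by move=> j' /negPf hj; apply: big1 => *; apply: big1 => *; rewrite hj mul0r.
rewrite (bigD1 i) //= [X in _ + X]big1 ?addr0; last first.
  by move=> i' /negPf hi; apply: big1 => *; rewrite eqxx hi mul0r.
rewrite (bigD1 t) //= [X in _ + X]big1 ?addr0; last first.
  by move=> t' /negPf ht; rewrite !eqxx ht mul0r.
by rewrite !eqxx mul1r.
Qed.

Lemma KA_asglo j G : \sum_v KA (@RAsgLo J m (Tn c S) S j) v * G v =
  \sum_(i < m) \sum_(t < Tn c S) G (zv j i t).
Proof.
rewrite sum_var /= [X in _ + X]big1 ?addr0; last first.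
  by move=> *; apply: big1 => *; apply: big1 => *; rewrite mul0r.
rewrite (bigD1 j) //= [X in _ + X]big1 ?addr0; last first.
  by move=> j' /negPf hj; apply: big1 => *; apply: big1 => *; rewrite hj mul0r.
by apply: eq_bigr => *; apply: eq_bigr => *; rewrite eqxx mul1r.
Qed.

Lemma KA_asgup j G : \sum_v KA (@RAsgUp J m (Tn c S) S j) v * G v =
  - \sum_(i < m) \sum_(t < Tn c S) G (zv j i t).
Proof.
rewrite sum_var /= [X in _ + X]big1 ?addr0; last first.
  by move=> *; apply: big1 => *; apply: big1 => *; rewrite mul0r.
rewrite (bigD1 j) //= [X in _ + X]big1 ?addr0; last first.
  by move=> j' /negPf hj; apply: big1 => *; apply: big1 => *; rewrite hj ?mulr0n oppr0 mul0r.
rewrite -!sumrN; apply: eq_bigr => *; rewrite -sumrN.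
by apply: eq_bigr => *; rewrite eqxx mulN1r.
Qed.

Lemma KA_cap i t G : \sum_v KA (@RCap J m (Tn c S) S i t) v * G v =
  - \sum_(j : J) G (zv j i t).
Proof.
rewrite sum_var /= [X in _ + X]big1 ?addr0; last first.
  by move=> *; apply: big1 => *; apply: big1 => *; rewrite mul0r.
rewrite -sumrN; apply: eq_bigr => j _.
rewrite (bigD1 i) //= [X in _ + X]big1 ?addr0; last first.
  by move=> i' /negPf hi; apply: big1 => *; rewrite hi ?mulr0n oppr0 mul0r.
rewrite (bigD1 t) //= [X in _ + X]big1 ?addr0; last first.
  by move=> t' /negPf ht; rewrite eqxx ht ?mulr0n oppr0 mul0r.
by rewrite !eqxx mulN1r.
Qed.

Lemma KA_slotlo j i s G : \sum_v KA (@RSlotLo J m (Tn c S) S j i s) v * G v =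
  \sum_(t < Tn c S | (c * s <= t < c * s + c)%N) G (zv j i t) - G (xv j i s).
Proof.
rewrite sum_var /=; congr (_ + _).
  rewrite (bigD1 j) //= [X in _ + X]big1 ?addr0; last first.
    by move=> j' /negPf hj; apply: big1 => *; apply: big1 => *; rewrite hj mul0r.
  rewrite (bigD1 i) //= [X in _ + X]big1 ?addr0; last first.
    by move=> i' /negPf hi; apply: big1 => *; rewrite eqxx hi mul0r.
  rewrite [RHS]big_mkcond /=; apply: eq_bigr => t _; rewrite !eqxx /=.
  by case: ifP; rewrite ?mul1r ?mul0r.
rewrite (bigD1 j) //= [X in _ + X]big1 ?addr0; last first.
  by move=> j' /negPf hj; apply: big1 => *; apply: big1 => *; rewrite hj ?mulr0n oppr0 mul0r.
rewrite (bigD1 i) //= [X in _ + X]big1 ?addr0; last first.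
  by move=> i' /negPf hi; apply: big1 => *; rewrite eqxx hi ?mulr0n oppr0 mul0r.
rewrite (bigD1 s) //= [X in _ + X]big1 ?addr0; last first.
  by move=> s' /negPf hs; rewrite !eqxx hs ?mulr0n oppr0 mul0r.
by rewrite !eqxx mulN1r.
Qed.

Lemma KA_slotup j i s G : \sum_v KA (@RSlotUp J m (Tn c S) S j i s) v * G v =
  - (\sum_(t < Tn c S | (c * s <= t < c * s + c)%N) G (zv j i t) - G (xv j i s)).
Proof.
rewrite -KA_slotlo -sumrN; apply: eq_bigr => -[[[j' i'] t']|[[j' i'] s']] _ /=;
by rewrite ?mulNr ?opprK.
Qed.
End X.

Section Y.
Variables (R : realFieldType) (J : finType) (prec : rel J) (c S m r : nat).
Variables (Y : {set var J m c S} -> R).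
Hypothesis HY : SAK prec r Y.
Hypothesis r1 : (1 <= r)%N.
Local Notation zv := (@zv J m c S).
Local Notation xv := (@xv J m c S).

Lemma N0 u i t : 0 <= Y [set zv u i t].
Proof.
have := @SA0 R J prec c S m r Y (@RNonneg J m (Tn c S) S u i t) HY.
by rewrite (@KA_nonneg R J prec c S m _ _ _ (fun v => Y [set v])) /= subr0.
Qed.

Lemma N1 w u i t : 0 <= Y [set w; zv u i t].
Proof.
have := @SA1 R J prec c S m r Y (@RNonneg J m (Tn c S) S u i t) w r1 HY.
by rewrite (@KA_nonneg R J prec c S m _ _ _ (fun v => Y [set w; v])) /= mul0r subr0.
Qed.

Lemma Asg0 u : \sum_(i < m) \sum_(t < Tn c S) Y [set zv u i t] = 1.
Proof.
have := @SA0 R J prec c S m r Y (@RAsgLo J m (Tn c S) S u) HY.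
have := @SA0 R J prec c S m r Y (@RAsgUp J m (Tn c S) S u) HY.
rewrite (@KA_asglo R J prec c S m _ (fun v => Y [set v])) (@KA_asgup R J prec c S m _ (fun v => Y [set v])) /=.
move=> h1 h2; apply/eqP; rewrite eq_le; apply/andP; split; lra.
Qed.

Lemma Asg1 w u : \sum_(i < m) \sum_(t < Tn c S) Y [set w; zv u i t] = Y [set w].
Proof.
have := @SA1 R J prec c S m r Y (@RAsgLo J m (Tn c S) S u) w r1 HY.
have := @SA1 R J prec c S m r Y (@RAsgUp J m (Tn c S) S u) w r1 HY.
rewrite (@KA_asglo R J prec c S m _ (fun v => Y [set w; v])) (@KA_asgup R J prec c S m _ (fun v => Y [set w; v])) /=.
move=> h1 h2; apply/eqP; rewrite eq_le; apply/andP; split; lra.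
Qed.

Lemma Cap1 w i t : \sum_(u : J) Y [set w; zv u i t] <= Y [set w].
Proof.
have := @SA1 R J prec c S m r Y (@RCap J m (Tn c S) S i t) w r1 HY.
rewrite (@KA_cap R J prec c S m _ _ (fun v => Y [set w; v])) /=; lra.
Qed.

Lemma Slot1 w u i (s : 'I_S) :
  \sum_(t < Tn c S | (c * s <= t < c * s + c)%N) Y [set w; zv u i t] = Y [set w; xv u i s].
Proof.
have := @SA1 R J prec c S m r Y (@RSlotLo J m (Tn c S) S u i s) w r1 HY.
have := @SA1 R J prec c S m r Y (@RSlotUp J m (Tn c S) S u i s) w r1 HY.
rewrite (@KA_slotlo R J prec c S m _ _ _ (fun v => Y [set w; v])) (@KA_slotup R J prec c S m _ _ _ (fun v => Y [set w; v])) /=.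
move=> h1 h2; apply/eqP; rewrite eq_le; apply/andP; split; lra.
Qed.
End Y.


Lemma subsum (R : realFieldType) (T : finType) (P : pred T) (F : T -> R) :
  (forall x, 0 <= F x) -> \sum_(x | P x) F x <= \sum_x F x.
Proof.
move=> F0; rewrite big_mkcond /=; apply: ler_sum => x _.
by case: ifP => _ //.
Qed.

Lemma sum_mono_pred (R : realFieldType) (T : finType) (P Q : pred T) (F : T -> R) :
  (forall x, P x -> Q x) -> (forall x, 0 <= F x) ->
  \sum_(x | P x) F x <= \sum_(x | Q x) F x.
Proof.
move=> PQ F0; rewrite big_mkcond [X in _ <= X]big_mkcond /=.
apply: ler_sum => x _; case: ifP => h; first by rewrite PQ.
by case: ifP.
Qed.

Lemma partition_le (R : realFieldType) (c S : nat) (H : 'I_(Tn c S) -> R) :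
  (forall t, 0 <= H t) ->
  \sum_(s < S) \sum_(t < Tn c S | (c * s <= t < c * s + c)%N) H t <= \sum_t H t.
Proof.
move=> H0.
under eq_bigr => s _ do rewrite big_mkcond.
rewrite exchange_big /=; apply: ler_sum => t _.
case: (pickP (fun s : 'I_S => (c * s <= t < c * s + c)%N)) => [s0 hs0 | none].
  rewrite (bigD1 s0) //= hs0 big1 ?addr0 // => s' hs'.
  case: ifP => // hP; exfalso; move: hs'; rewrite -(inj_eq val_inj) /=.
  move: hP hs0 => /andP[a1 a2] /andP[b1 b2].
  case: (ltngtP s' s0) => // h.
    have : (c * s'.+1 <= c * s0)%N by rewrite leq_mul2l h orbT.
    by rewrite mulnS; lia.
  have : (c * s0.+1 <= c * s')%N by rewrite leq_mul2l h orbT.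
  by rewrite mulnS; lia.
rewrite big1 // => s _; by rewrite none.
Qed.

Lemma count_le (R : realFieldType) (T t0 : nat) :
  \sum_(t < T | (t < t0)%N) (1 : R) <= t0%:R.
Proof.
rewrite -(big_mkord (fun t => (t < t0)%N) (fun _ => (1:R))) big_mkcond /=.
have -> : \sum_(0 <= i < T) (if (i < t0)%N then (1:R) else 0) = (minn T t0)%:R.
  elim: T => [|T IH]; first by rewrite big_geq // min0n.
  rewrite big_nat_recr //= IH; case: ltnP => h.
    by rewrite ?natr1 ?addr0; apply/eqP; rewrite eqr_nat; apply/eqP; lia.
  by rewrite ?natr1 ?addr0; apply/eqP; rewrite eqr_nat; apply/eqP; lia.
by rewrite ler_nat geq_minr.
Qed.

Section Z.
Variables (R : realFieldType) (J : finType) (prec : rel J) (c S m r : nat).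
Variables (Y : {set var J m c S} -> R).
Hypothesis HY : SAK prec r Y.
Local Notation zv := (@zv J m c S).

Lemma cumz_mono u a b : (a <= b)%N -> cumz Y u a <= cumz Y u b.
Proof.
move=> ab; rewrite /cumz; apply: (@ler_sum R) => i _.
apply: sum_mono_pred => [t h|t]; first exact: leq_trans h ab.
rewrite /zval; exact: (N0 HY u i t).
Qed.

Lemma cumz_full u b : (Tn c S <= b)%N -> cumz Y u b = 1.
Proof.
move=> hb; rewrite -(Asg0 HY u) /cumz; apply: eq_bigr => i _.
by apply: eq_bigl => t /=; apply: leq_trans hb.
Qed.

Lemma tstar_le (eps : R) u t0 : 0 <= eps -> (tstar Y eps u <= t0)%N ->
  1 - eps <= cumz Y u t0.
Proof.
move=> e0; rewrite /tstar.
set P := (fun t' => 1 - eps <= cumz Y u t').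
case: (ltnP (find P (iota 1 (Tn c S))) (size (iota 1 (Tn c S)))) => hk ht.
  have hh : has P (iota 1 (Tn c S)) by rewrite has_find.
  have := nth_find 0%N hh.
  rewrite size_iota in hk; rewrite nth_iota // /P => h.
  apply: le_trans h _; apply: cumz_mono; by rewrite add1n.
rewrite size_iota in hk; rewrite cumz_full ?lerBlDr ?lerDl //.
by apply: leq_trans hk _; apply: ltnW.
Qed.
End Z.


Section W.
Variables (R : realFieldType) (J : finType) (prec : rel J) (c S m r : nat).
Variables (Y : {set var J m c S} -> R).
Hypothesis HY : SAK prec r Y.
Hypothesis r1 : (1 <= r)%N.
Local Notation zv := (@zv J m c S).
Local Notation xv := (@xv J m c S).

Definition Wf (u j : J) (t0 : nat) : R :=
  \sum_(i < m) \sum_(t < Tn c S | (t < t0)%N) \sum_(t'' < Tn c S)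
     Y [set zv u i t; zv j i t''].

Lemma E_le u j i t :
  \sum_(t'' < Tn c S) Y [set zv u i t; zv j i t''] <= Y [set zv u i t].
Proof.
rewrite -(Asg1 HY r1 (zv u i t) j) (bigD1 i) //= lerDl.
apply: sumr_ge0 => i' _; apply: sumr_ge0 => t'' _; exact: (N1 HY r1).
Qed.

Lemma y_le_Z u j :
  \sum_(s < S) \sum_(i < m) Y [set xv u i s; xv j i s] <=
  \sum_(i < m) \sum_(t < Tn c S) \sum_(t'' < Tn c S) Y [set zv u i t; zv j i t''].
Proof.
have eq1 s i : Y [set xv u i s; xv j i s] =
  \sum_(t < Tn c S | (c * s <= t < c * s + c)%N)
   \sum_(t'' < Tn c S | (c * s <= t'' < c * s + c)%N) Y [set zv u i t; zv j i t''].
  rewrite setUC -(Slot1 HY r1 (xv j i s) u i s); apply: eq_bigr => t _.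
  by rewrite setUC -(Slot1 HY r1 (zv u i t) j i s).
under eq_bigr do under eq_bigr do rewrite eq1.
rewrite exchange_big /=; apply: ler_sum => i _.
apply: le_trans (partition_le _); last first.
  by move=> t; apply: sumr_ge0 => t'' _; exact: (N1 HY r1).
apply: ler_sum => s _; apply: ler_sum => t _; apply: subsum => t''.
exact: (N1 HY r1).
Qed.

Lemma claimA u j t0 :
  cumz Y u t0 - Wf u j t0 <=
  1 - \sum_(s < S) \sum_(i < m) Y [set xv u i s; xv j i s].
Proof.
apply: le_trans (_ : 1 - \sum_(i < m) \sum_(t < Tn c S) \sum_(t'' < Tn c S)
   Y [set zv u i t; zv j i t''] <= _); last by rewrite lerB // y_le_Z.
rewrite /cumz /Wf -(Asg0 HY u) -!sumrB; apply: ler_sum => i _.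
rewrite -!sumrB; apply: subsum => t; rewrite subr_ge0; exact: E_le.
Qed.

Lemma claimB (B : {set J}) j t0 : \sum_(u in B) Wf u j t0 <= t0%:R.
Proof.
apply: le_trans (_ : \sum_u Wf u j t0 <= _).
  apply: subsum => u; apply: sumr_ge0 => i _; apply: sumr_ge0 => t _.
  apply: sumr_ge0 => t'' _; exact: (N1 HY r1).
rewrite /Wf exchange_big /=.
apply: le_trans (_ : \sum_(i < m) \sum_(t < Tn c S | (t < t0)%N)
   \sum_(t'' < Tn c S) Y [set zv j i t''] <= _).
  apply: ler_sum => i _; rewrite exchange_big /=; apply: ler_sum => t _.
  rewrite exchange_big /=; apply: ler_sum => t'' _.
  under eq_bigr do rewrite setUC.
  exact: (Cap1 HY r1).
rewrite exchange_big /=.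
apply: le_trans (count_le R (Tn c S) t0); apply: ler_sum => t _.
by rewrite (Asg0 HY j).
Qed.
End W.


Theorem mainTheorem16 (R : realFieldType) (J : finType) (prec : rel J)
  (c S m r : nat) (eps : R)
  (Y : {set var J m c S} -> R) (y : J -> J -> R) (C : J -> R)
  (U : {set J}) (sched : seq J) :
  irreflexive prec -> transitive prec ->
  0 < eps -> eps <= 12%:R^-1 ->
  (5 <= r)%N ->
  @Qtilde R J prec c S m r Y y C ->
  (forall u v, u \in U -> v \in U -> 1 - y u v <= eps) ->
  perm_eq sched (enum U) ->
  sorted (fun a b => (tstar Y eps a <= tstar Y eps b)%N) sched ->
  forall j, j \in U -> ((index j sched).+1 <= 2 * tstar Y eps j)%N.
Proof.
move=> _ _ e0 e12 r5 [HY Hy _ _] HU Hperm Hsort j jU.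
have r1 : (1 <= r)%N by apply: leq_trans r5.
set t0 := tstar Y eps j.
set B := [set u in U | (tstar Y eps u <= t0)%N].
have h2 : (#|B| <= 2 * t0)%N.
  have key : #|B|%:R * (1 - 2 * eps) <= t0%:R.
    apply: le_trans (claimB HY r1 B j t0).
    rewrite mulr_natl -sumr_const; apply: ler_sum => u; rewrite inE => /andP[uU hu].
    have h1 := tstar_le HY (ltW e0) hu.
    have h3 := claimA HY r1 u j t0.
    have h4 := HU u j uU jU.
    rewrite Hy in h4; rewrite /xpair in h4.
    lra.
  have e1 : 12 * eps <= 1.
    by move: e12; rewrite -[X in _ <= X]mulr1 ler_pdivlMl ?ltr0n.
  have hn : 0 <= #|B|%:R :> R by apply: ler0n.
  rewrite -(ler_nat R) natrM; nra.
have h1 : ((index j sched).+1 <= #|B|)%N.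
  have jS : j \in sched by rewrite (perm_mem Hperm) mem_enum.
  have usch : uniq sched by rewrite (perm_uniq Hperm) enum_uniq.
  set k := index j sched.
  have kS : (k < size sched)%N by rewrite index_mem.
  rewrite cardE -(size_takel kS).
  apply: uniq_leq_size; first exact: take_uniq.
  move=> x /(nthP j) [i]; rewrite size_takel // => hi <-.
  rewrite nth_take // mem_enum inE.
  have xS : nth j sched i \in sched by apply: mem_nth; apply: leq_trans hi kS.
  rewrite (perm_mem Hperm) mem_enum in xS; rewrite xS /=.
  have tr : transitive (fun a b => (tstar Y eps a <= tstar Y eps b)%N).
    by move=> b a d h h'; apply: leq_trans h h'.
  have rf : reflexive (fun a b => (tstar Y eps a <= tstar Y eps b)%N).
    by move=> a.
  have hi' : i \in [pred n | (n < size sched)%N] by rewrite inE; apply: leq_trans hi kS.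
  have hk' : k \in [pred n | (n < size sched)%N] by rewrite inE.
  have := sorted_leq_nth tr rf j Hsort i k hi' hk'; rewrite -ltnS => /(_ hi).
  by rewrite /k nth_index.
by apply: leq_trans h1 h2.
Qed.
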